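(* Let $\mathfrak g$ be a Lie algebra and $r_1,r_2\in\wedge^2\mathfrak g$ skew-symmetric $r$-matrices. Let $\phi:\mathfrak g\to\mathfrak g$ be a Lie algebra homomorphism and $\varphi:\mathfrak g\to\mathfrak g$ a linear map. Then $(\phi,\varphi)$ is a weak homomorphism (resp. weak isomorphism) from $r_2$ to $r_1$ if and only if $(\phi,\varphi^* )$ is a homomorphism (resp. isomorphism) from $r_2^\sharp$ to $r_1^\sharp$ as $\mathcal O$-operators on $\mathfrak g$ with respect to the coadjoint representation.
   Context: A skew-symmetric $r$-matrix is $r\in\wedge^2\mathfrak g$ with $[r,r]=0$ (Gerstenhaber bracket); $r^\sharp:\mathfrak g^*\to\mathfrak g$, $\langle r^\sharp\xi,\eta\rangle=\langle r,\xi\otimes\eta\rangle$, is then an $\mathcal O$-operator with respect to the coadjoint representation $\mathrm{ad}^*$, $\langle\mathrm{ad}^*_x\xi,y\rangle=-\langle\xi,[x,y]\rangle$. A weak homomorphism from $r_2$ to $r_1$ is a pair of a Lie algebra homomorphism $\phi:\mathfrak g\to\mathfrak g$ and a linear map $\varphi:\mathfrak g\to\mathfrak g$ with $(\varphi\otimes\mathrm{Id}_{\mathfrak g})(r_1)=(\mathrm{Id}_{\mathfrak g}\otimes\phi)(r_2)$ and $\varphi[\phi(x),y]=[x,\varphi(y)]$ for all $x,y\in\mathfrak g$; a weak isomorphism if moreover $\phi,\varphi$ are linear isomorphisms. For $\mathcal O$-operators $T,T':V\to\mathfrak g$ with respect to a representation $(V;\rho)$, a homomorphism from $T'$ to $T$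 is a pair of a Lie algebra homomorphism $\phi_{\mathfrak g}:\mathfrak g\to\mathfrak g$ and a linear $\phi_V:V\to V$ with $T\circ\phi_V=\phi_{\mathfrak g}\circ T'$ and $\phi_V\rho(x)(u)=\rho(\phi_{\mathfrak g}(x))(\phi_V(u))$; an isomorphism if both are invertible. Here $V=\mathfrak g^*$, $\rho=\mathrm{ad}^*$, and $\varphi^*:\mathfrak g^*\to\mathfrak g^*$ is the dual map. *)

(* Defs.v *)
(* A finite-dimensional Lie algebra g over a field K is
   modelled in coordinates as the row space 'rV[K]_n with an abstract
   bracket [br]; its dual g^* is again 'rV[K]_n, paired with g via the
   standard pairing <xi, x> = sum_i xi_i x_i.  Linear maps g -> g are
   matrices acting on the right (x |-> x *m A). *)
From mathcomp Require Import all_boot all_order all_algebra.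
Set Implicit Arguments. Unset Strict Implicit. Unset Printing Implicit Defensive.
Import GRing.Theory.
Local Open Scope ring_scope.

Section LieDefs.
Variables (K : fieldType) (n : nat).
Notation vec := 'rV[K]_n.

Definition ebasis (j : 'I_n) : vec := delta_mx 0 j.

Definition is_lie (br : vec -> vec -> vec) : Prop :=
  [/\ forall a x y z, br (a *: x + y) z = a *: br x z + br y z,
      forall a x y z, br x (a *: y + z) = a *: br x y + br x z,
      forall x, br x x = 0 &
      forall x y z, br x (br y z) + br y (br z x) + br z (br x y) = 0].

Definition is_lie_hom (br : vec -> vec -> vec) (P : 'M[K]_n) : Prop :=
  forall x y, br x y *m P = br (x *m P) (y *m P).

Definition dpair (xi : vec) (x : vec) : K := (xi *m x^T) 0 0.

(* dual map of the linear map x |-> x *m P : the matrix Q with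
   <xi *m Q, x> = <xi, x *m P>, namely P^T *)
Definition dualmap (P : 'M[K]_n) : 'M[K]_n := P^T.

(* coadjoint representation: <ad^*_x xi, y> = - <xi, [x, y]> *)
Definition coad (br : vec -> vec -> vec) (x : vec) (xi : vec) : vec :=
  \row_j (- dpair xi (br x (ebasis j))).

(* an element r = sum_{ij} R i j e_i (x) e_j of g (x) g, given by R;
   <r, xi (x) eta> *)
Definition tpair (R : 'M[K]_n) (xi eta : vec) : K := (xi *m R *m eta^T) 0 0.

Definition rsharp (R : 'M[K]_n) (xi : vec) : vec :=
  \row_j tpair R xi (ebasis j).

(* (A (x) B)(r) for linear maps A, B (acting on the right) *)
Definition tensor_map (A B R : 'M[K]_n) : 'M[K]_n := A^T *m R *m B.

(* skew-symmetry: r in wedge^2 g *)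
Definition skew (R : 'M[K]_n) : Prop := R^T = - R.

Definition brc (br : vec -> vec -> vec) (i k a : 'I_n) : K :=
  br (ebasis i) (ebasis k) 0 a.

(* [r, r] as an element of g (x) g (x) g (coefficient at e_a (x) e_b (x) e_c):
   [r12, r13] + [r12, r23] + [r13, r23] *)
Definition rr_bracket (br : vec -> vec -> vec) (R : 'M[K]_n)
    (a b c : 'I_n) : K :=
  \sum_(i < n) \sum_(k < n) R i b * R k c * brc br i k a
  + \sum_(j < n) \sum_(k < n) R a j * R k c * brc br j k b
  + \sum_(j < n) \sum_(l < n) R a j * R b l * brc br j l c.

Definition is_skew_rmatrix (br : vec -> vec -> vec) (R : 'M[K]_n) : Prop :=
  skew R /\ forall a b c, rr_bracket br R a b c = 0.

Definition weak_hom (br : vec -> vec -> vec) (R2 R1 Phi Vphi : 'M[K]_n)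
  : Prop :=
  [/\ is_lie_hom br Phi,
      tensor_map Vphi 1%:M R1 = tensor_map 1%:M Phi R2 &
      forall x y, br (x *m Phi) y *m Vphi = br x (y *m Vphi)].

Definition weak_iso (br : vec -> vec -> vec) (R2 R1 Phi Vphi : 'M[K]_n)
  : Prop :=
  [/\ weak_hom br R2 R1 Phi Vphi, Phi \in unitmx & Vphi \in unitmx].

Definition Ohom (br : vec -> vec -> vec) (rho : vec -> vec -> vec)
    (T' T : vec -> vec) (Phig PhiV : 'M[K]_n) : Prop :=
  [/\ is_lie_hom br Phig,
      forall u, T (u *m PhiV) = T' u *m Phig &
      forall x u, rho x u *m PhiV = rho (x *m Phig) (u *m PhiV)].

Definition Oiso (br : vec -> vec -> vec) (rho : vec -> vec -> vec)
    (T' T : vec -> vec) (Phig PhiV : 'M[K]_n) : Prop :=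
  [/\ Ohom br rho T' T Phig PhiV, Phig \in unitmx & PhiV \in unitmx].

End LieDefs.

(* Main.v *)
Require Import Defs.
From mathcomp Require Import all_boot all_order all_algebra.
Local Open Scope ring_scope.
Import GRing.Theory.

Section Aux.
Variables (K : fieldType) (n : nat) (br : 'rV[K]_n -> 'rV[K]_n -> 'rV[K]_n).

Definition Mx (x : 'rV[K]_n) : 'M[K]_n := \matrix_(i, j) br x (@ebasis K n i) 0 j.

Lemma brM (Hlie : is_lie br) x y : br x y = y *m Mx x.
Proof.
case: Hlie => _ H _ _.
have h0 : br x 0 = 0.
  have e := H 1 x 0 0; rewrite !scale1r !addr0 in e.
  by apply/esym/(addrI (br x 0)); rewrite addr0 -e.
have hD : forall a b, br x (a + b) = br x a + br x b.
  by move=> a b; have := H 1 x a b; rewrite !scale1r.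
have hZ : forall c a, br x (c *: a) = c *: br x a.
  by move=> c a; have := H c x a 0; rewrite !addr0 h0 addr0.
rewrite mulmx_sum_row {1}(row_sum_delta y).
apply: (big_ind2 (fun a b => br x a = b)) => //.
  by move=> a b c d <- <-; rewrite hD.
move=> i _; rewrite hZ; congr (_ *: _).
by apply/rowP => j; rewrite !mxE.
Qed.

Lemma coadE x u : coad br x u = - (u *m (Mx x)^T).
Proof.
apply/rowP => j; rewrite !mxE /dpair !mxE; congr (- _).
by apply: eq_bigr => k _; rewrite !mxE.
Qed.

Lemma rsharpE (R : 'M[K]_n) xi : rsharp R xi = xi *m R.
Proof.
apply/rowP => j; rewrite [in LHS]mxE /tpair /ebasis trmx_delta -colE [in LHS]mxE.
reflexivity.
Qed.

Lemma mx_ext (A B : 'M[K]_n) : (forall u : 'rV[K]_n, u *m A = u *m B) -> A = B.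
Proof. by move=> H; apply/row_matrixP => i; rewrite !rowE H. Qed.

End Aux.

Theorem proposition7p11 (K : fieldType) (n : nat)
    (br : 'rV[K]_n -> 'rV[K]_n -> 'rV[K]_n) (Hlie : is_lie br)
    (R1 R2 : 'M[K]_n)
    (hr1 : is_skew_rmatrix br R1) (hr2 : is_skew_rmatrix br R2)
    (Phi Vphi : 'M[K]_n) (hPhi : is_lie_hom br Phi) :
  (weak_hom br R2 R1 Phi Vphi <->
     Ohom br (coad br) (rsharp R2) (rsharp R1) Phi (dualmap Vphi)) /\
  (weak_iso br R2 R1 Phi Vphi <->
     Oiso br (coad br) (rsharp R2) (rsharp R1) Phi (dualmap Vphi)).
Proof.
have E2 : (Vphi^T *m R1 = R2 *m Phi) <->
    (forall u, rsharp R1 (u *m dualmap Vphi) = rsharp R2 u *m Phi).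
  split.
    by move=> H u; rewrite !rsharpE /dualmap -mulmxA H mulmxA.
  move=> H; apply: mx_ext => u; have := H u.
  by rewrite !rsharpE /dualmap !mulmxA.
have E3 : (forall x y, br (x *m Phi) y *m Vphi = br x (y *m Vphi)) <->
    (forall x u, coad br x u *m dualmap Vphi
                 = coad br (x *m Phi) (u *m dualmap Vphi)).
  have step : (forall x y, br (x *m Phi) y *m Vphi = br x (y *m Vphi)) <->
      (forall x, @Mx K n br (x *m Phi) *m Vphi = Vphi *m @Mx K n br x).
    split.
      move=> H x; apply: mx_ext => y; have := H x y.
      by rewrite !(@brM K n br Hlie) !mulmxA.
    by move=> H x y; rewrite !(@brM K n br Hlie) -!mulmxA H.
  split.
    move=> /step H x u; rewrite !coadE /dualmap mulNmx -!mulmxA -!trmx_mul H.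
    by [].
  move=> H; apply/step => x; apply: trmx_inj; apply: mx_ext => u.
  have := H x u; rewrite !coadE /dualmap mulNmx -!mulmxA -!trmx_mul.
  by move/oppr_inj.
have EH : weak_hom br R2 R1 Phi Vphi <->
     Ohom br (coad br) (rsharp R2) (rsharp R1) Phi (dualmap Vphi).
  rewrite /weak_hom /Ohom /tensor_map trmx1 mul1mx mulmx1.
  split.
    by case=> a b c; split => //; [apply/E2 | apply/E3].
  by case=> a b c; split => //; [apply/E2 | apply/E3].
split => //.
rewrite /weak_iso /Oiso /dualmap unitmx_tr.
split; case=> a b c; split => //; by apply/EH.
Qed.
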